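(* Let $P$ be a finite poset, $R$ a commutative unital ring, and $D$ a derivation of $I^3(P,R)$. Then for all $x<y$ in $P$, $$D(e_{xyy})=\sum_{v\in P,\ y<v}D(e_y)(y,y,v)\,e_{xyv}+\sum_{u\in P,\ u\le y}D(e_{xyy})(u,y,y)\,e_{uyy},$$ $$D(e_{xxy})=\sum_{v\in P,\ x\le v}D(e_{xxy})(x,x,v)\,e_{xxv}+\sum_{u\in P,\ u<x}D(e_x)(u,x,x)\,e_{uxy}.$$
   Context: For a finite poset $P$, $P^3_\le=\{(x,y,z)\in P^3: x\le y\le z\}$, and $I^3(P,R)$ is the $R$-module of functions $f:P^3_\le\to R$ with multiplication $(fg)(x_1,x_2,x_3)=\sum f(x_1,y_1,y_2)g(y_1,y_2,x_3)$ over all $x_1\le y_1\le x_2\le y_2\le x_3$. For $x\le y\le z$, $e_{xyz}$ is the function equal to $1$ at $(x,y,z)$ and $0$ elsewhere, and $e_x:=e_{xxx}$. A derivation is an $R$-linear map $D:I^3(P,R)\to I^3(P,R)$ with $D(fg)=D(f)g+fD(g)$. *)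

(* Defs.v *)
From HB Require Import structures.
From mathcomp Require Import all_boot all_order all_algebra.
Set Implicit Arguments. Unset Strict Implicit. Unset Printing Implicit Defensive.
Import Order.TTheory GRing.Theory.
Local Open Scope ring_scope.

(* Elements of I^3(P,R) are represented as finite functions on P*P*P that
   vanish outside P^3_<= = {(x,y,z) | x <= y <= z}. *)
Notation fun3 P R := {ffun P * P * P -> R}.

Definition inI3 d (P : finPOrderType d) (R : comPzRingType) (f : fun3 P R) : Prop :=
  forall x y z : P, ~~ ((x <= y)%O && (y <= z)%O) -> f (x, y, z) = 0.

Definition mul3 d (P : finPOrderType d) (R : comPzRingType) (f g : fun3 P R)
  : fun3 P R :=
  [ffun t : P * P * P =>
     let: (x1, x2, x3) := t in
     \sum_(y1 : P) \sum_(y2 : P)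
       if [&& (x1 <= y1)%O, (y1 <= x2)%O, (x2 <= y2)%O & (y2 <= x3)%O]
       then f (x1, y1, y2) * g (y1, y2, x3) else 0].

Definition scale3 d (P : finPOrderType d) (R : comPzRingType) (a : R)
  (f : fun3 P R) : fun3 P R := [ffun t => a * f t].

Definition e3 d (P : finPOrderType d) (R : comPzRingType) (x y z : P) : fun3 P R :=
  [ffun t => if t == (x, y, z) then 1 else 0].

Definition is_derivation3 d (P : finPOrderType d) (R : comPzRingType)
  (D : fun3 P R -> fun3 P R) : Prop :=
  [/\ forall f : fun3 P R, inI3 f -> inI3 (D f),
      forall f g : fun3 P R, inI3 f -> inI3 g -> D (f + g) = D f + D g,
      forall (a : R) (f : fun3 P R), inI3 f -> D (scale3 a f) = scale3 a (D f)
    & forall f g : fun3 P R, inI3 f -> inI3 g ->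
        D (mul3 f g) = mul3 (D f) g + mul3 f (D g)].

(* Main.v *)
Require Import Defs.
From HB Require Import structures.
From mathcomp Require Import all_boot all_order all_algebra.
Import Order.TTheory GRing.Theory.
Local Open Scope ring_scope.

Section H.
Variables (d : Order.disp_t) (P : finPOrderType d) (R : comPzRingType).
Implicit Types f g : fun3 P R.

Lemma sum2_single (F : P -> P -> R) a0 b0 :
  (forall a b, (a, b) != (a0, b0) -> F a b = 0) ->
  \sum_a \sum_b F a b = F a0 b0.
Proof.
move=> H; rewrite (bigD1 a0) //=.
have -> : \sum_(i | i != a0) \sum_b F i b = 0.
  apply: big1 => a ha; apply: big1 => b _; apply: H.
  by apply: contra ha => /eqP [->].
rewrite addr0 (bigD1 b0) //=.
have -> : \sum_(i | i != b0) F a0 i = 0.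
  apply: big1 => b hb; apply: H.
  by apply: contra hb => /eqP [->].
by rewrite addr0.
Qed.

Lemma sum_at (p : pred P) (c : P -> R) (E : P -> fun3 P R) t u0 :
  (forall u, u != u0 -> E u t = 0) ->
  (\sum_(u | p u) scale3 (c u) (E u)) t = if p u0 then c u0 * E u0 t else 0.
Proof.
move=> H; rewrite sum_ffunE big_mkcond (bigD1 u0) //= big1 ?addr0.
  by rewrite ffunE.
by move=> u hu; case: ifP => // _; rewrite ffunE H ?mulr0.
Qed.

Lemma e3_off (a b c u : P) (x1 x2 x3 : P) :
  u != x1 -> e3 R u b c (x1, x2, x3) = 0.
Proof.
move=> hu; rewrite ffunE; case: eqP => // -[e1 _ _].
by rewrite e1 eqxx in hu.
Qed.

Lemma mul3_r f (a b : P) : (a <= b)%O ->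
  mul3 f (e3 R a a b) = \sum_(u | (u <= a)%O) scale3 (f (u, a, a)) (e3 R u a b).
Proof.
move=> hab; apply/ffunP => -[[x1 x2] x3]; rewrite ffunE /=.
rewrite (@sum2_single _ a a); last first.
  move=> p q Hpq; rewrite ffunE; case: ifP => // _.
  case: eqP => [[e1 e2 _]|_]; last by rewrite mulr0.
  by rewrite e1 e2 eqxx in Hpq.
rewrite (@sum_at _ _ _ _ x1); last by move=> u hu; apply: e3_off.
rewrite !ffunE !xpair_eqE !eqxx /=.
case: (x2 =P a) => [->|nx2]; case: (x3 =P b) => [->|nx3];
  rewrite ?lexx ?hab ?andbT ?mulr0 ?mulr1 ?if_same //=.
case: (boolP (a <= x2)%O) => h1; case: (boolP (x2 <= a)%O) => h2;
  rewrite ?andbF ?if_same //.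
by case: nx2; apply/le_anti; rewrite h1 h2.
Qed.

Lemma mul3_l g (a b : P) : (a <= b)%O ->
  mul3 (e3 R a b b) g = \sum_(v | (b <= v)%O) scale3 (g (b, b, v)) (e3 R a b v).
Proof.
move=> hab; apply/ffunP => -[[x1 x2] x3]; rewrite ffunE /=.
rewrite (@sum2_single _ b b); last first.
  move=> p q Hpq; rewrite ffunE; case: ifP => // _.
  case: eqP => [[_ e1 e2]|_]; last by rewrite mul0r.
  by rewrite e1 e2 eqxx in Hpq.
rewrite (@sum_at _ _ _ _ x3); last first.
  move=> u hu; rewrite ffunE; case: eqP => // -[_ _ e1].
  by rewrite e1 eqxx in hu.
rewrite !ffunE !xpair_eqE !eqxx /=.
case: (x2 =P b) => [->|nx2]; case: (x1 =P a) => [->|nx1];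
  rewrite ?lexx ?hab ?andbT ?mul0r ?mul1r ?mulr1 ?mulr0 ?if_same ?andbF //=.
case: (boolP (b <= x2)%O) => h1; case: (boolP (x2 <= b)%O) => h2;
  rewrite ?andbF ?if_same //.
by case: nx2; apply/le_anti; rewrite h1 h2.
Qed.

Lemma inI3_e3 (a b c : P) : (a <= b)%O -> (b <= c)%O -> inI3 (e3 R a b c).
Proof.
move=> h1 h2 x y z; rewrite ffunE; case: eqP => // -[-> -> ->].
by rewrite h1 h2.
Qed.

Lemma scale3_0 f : scale3 0 f = 0.
Proof. by apply/ffunP => t; rewrite !ffunE mul0r. Qed.

Lemma scale3_1 f : scale3 1 f = f.
Proof. by apply/ffunP => t; rewrite !ffunE mul1r. Qed.

Lemma e3_idem_r (a b : P) : (a <= b)%O -> mul3 (e3 R a b b) (e3 R b b b) = e3 R a b b.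
Proof.
move=> hab; rewrite mul3_l // (bigD1 b) //= big1 ?addr0.
  by rewrite ffunE eqxx scale3_1.
move=> v /andP [_ hv]; rewrite ffunE xpair_eqE /= (negbTE hv) andbF.
exact: scale3_0.
Qed.

Lemma e3_idem_l (a b : P) : (a <= b)%O -> mul3 (e3 R a a a) (e3 R a a b) = e3 R a a b.
Proof.
move=> hab; rewrite mul3_r // (bigD1 a) //= big1 ?addr0.
  by rewrite ffunE eqxx scale3_1.
move=> v /andP [_ hv]; rewrite ffunE !xpair_eqE /= (negbTE hv) /=.
exact: scale3_0.
Qed.

Lemma diag0 (D : fun3 P R -> fun3 P R) (a : P) :
  is_derivation3 D -> D (e3 R a a a) (a, a, a) = 0.
Proof.
case=> _ _ _ Hm.
have ie := @inI3_e3 a a a (lexx a) (lexx a).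
have := congr1 (fun h : fun3 P R => h (a, a, a)) (Hm _ _ ie ie).
rewrite /= e3_idem_l // ffunE [in X in _ = _ + X]mul3_l // [in X in _ = X + _]mul3_r //.
rewrite (@sum_at _ _ _ _ a); last by move=> u hu; apply: e3_off.
rewrite (@sum_at _ _ _ _ a); last first.
  move=> u hu; rewrite ffunE; case: eqP => // /eqP; rewrite !xpair_eqE.
  by move=> /andP[_ /eqP e]; rewrite e eqxx in hu.
rewrite lexx !ffunE eqxx mulr1 => h.
by apply: (addrI (D (e3 R a a a) (a, a, a))); rewrite addr0 -h.
Qed.

End H.

Theorem lemma4p2 (d : Order.disp_t) (P : finPOrderType d) (R : comPzRingType)
  (D : fun3 P R -> fun3 P R) :
  is_derivation3 D ->
  forall x y : P, (x < y)%O ->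
    D (e3 R x y y) =
      \sum_(v : P | (y < v)%O) scale3 (D (e3 R y y y) (y, y, v)) (e3 R x y v)
      + \sum_(u : P | (u <= y)%O) scale3 (D (e3 R x y y) (u, y, y)) (e3 R u y y)
    /\
    D (e3 R x x y) =
      \sum_(v : P | (x <= v)%O) scale3 (D (e3 R x x y) (x, x, v)) (e3 R x x v)
      + \sum_(u : P | (u < x)%O) scale3 (D (e3 R x x x) (u, x, x)) (e3 R u x y).
Proof.
move=> HD x y hxy; have hle := ltW hxy.
have HD' := HD; case: HD' => _ _ _ Hm.
have i1 := @inI3_e3 _ _ R x y y hle (lexx y).
have i2 := @inI3_e3 _ _ R y y y (lexx y) (lexx y).
have i3 := @inI3_e3 _ _ R x x y (lexx x) hle.
have i4 := @inI3_e3 _ _ R x x x (lexx x) (lexx x).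
split.
  rewrite -{1}(@e3_idem_r _ _ R x y hle) (Hm _ _ i1 i2).
  rewrite mul3_r ?lexx // mul3_l // addrC.
  congr (_ + _).
  rewrite (bigD1 y) //= diag0 // scale3_0 add0r.
  by apply: eq_bigl => v; rewrite lt_def andbC.
rewrite -{1}(@e3_idem_l _ _ R x y hle) (Hm _ _ i4 i3).
rewrite mul3_r // mul3_l ?lexx // addrC.
congr (_ + _).
rewrite (bigD1 x) //= diag0 // scale3_0 add0r.
by apply: eq_bigl => v; rewrite lt_def andbC eq_sym.
Qed.
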